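(* Let $q\ge2$, let $U$ be dual-unitary on $\mathbb{C}^q\otimes\mathbb{C}^q$, and let $\lambda_1,\dots,\lambda_{q^2-1}$ be the nontrivial eigenvalues of $\mathcal{M}_+^U$ (respectively of $\mathcal{M}_-^U$), ordered so that $|\lambda_1|\ge|\lambda_2|\ge\dots\ge|\lambda_{q^2-1}|$. Then $$\sum_{i=1}^{q^2-1}|\lambda_i|^2\le (q^2-1)(1-e_p(U)),\qquad |\lambda_k|\le \sqrt{1-e_p(U)}\,\frac{\sqrt{q^2-1}}{\sqrt k}\quad(1\le k\le q^2-1),$$ in particular $|\lambda_{q^2-1}|\le\sqrt{1-e_p(U)}$ and $|\lambda_1|\le\sqrt{1-e_p(U)}\sqrt{q^2-1}$. Consequently, for $1\le k\le q^2-1$, if $e_p(U)>1-\frac{k}{q^2-1}$ then $|\lambda_j|<1$ for all $j\ge k$; and if $e_p(U)>\frac{q^2-2}{q^2-1}$, then all nontrivial eigenvalues of both $\mathcal{M}_+^{U'}$ and $\mathcal{M}_-^{U'}$ have modulus strictly less than $1$ for every $U'=(u_1\otimes u_2)U(v_1\otimes v_2)$ with $u_1,u_2,v_1,v_2\in U(q)$ (the circuit is mixing whatever the single-site unitaries).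
   Context: Product basis $|i\alpha\rangle$ of $\mathbb{C}^q\otimes\mathbb{C}^q$; realignment $\langle\beta\alpha|X^{R_1}|ji\rangle=\langle i\alpha|X|j\beta\rangle$; $U$ is dual-unitary if $U$ and $U^{R_1}$ are unitary. $S$ is the swap operator. $E(U)=1-q^{-4}\operatorname{tr}[(U^{R_1}U^{R_1\dagger})^2]$, $E(S)=1-1/q^2$, and $e_p(U)=\frac{E(U)+E(US)-E(S)}{E(S)}$. For unitary $U$, $\mathcal{M}_+^U(a)=\frac1q\operatorname{tr}_1[U^\dagger(a\otimes I)U]$ and $\mathcal{M}_-^U(a)=\frac1q\operatorname{tr}_2[U^\dagger(I\otimes a)U]$ on $q\times q$ matrices; each fixes $I$ and preserves the space of traceless matrices, and its nontrivial eigenvalues are the $q^2-1$ eigenvalues (with algebraic multiplicity) of its restriction to traceless matrices. *)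

(* Defs.v *)
(* Complex scalars: an arbitrary numClosedFieldType C
   (e.g. the complex numbers); '|x|' is the modulus, x^* the conjugate. *)
From HB Require Import structures.
From mathcomp Require Import all_boot all_order all_algebra.
Set Implicit Arguments.
Unset Strict Implicit.
Unset Printing Implicit Defensive.
Import Order.TTheory GRing.Theory Num.Theory.
Local Open Scope ring_scope.

Section Defs.
Variables (C : numClosedFieldType) (q : nat).

(* Product basis |i alpha> of C^q (x) C^q is indexed by mxvec_index i alpha
   (value i*q + alpha) in 'I_(q*q). *)
Definition idx (i a : 'I_q) : 'I_(q * q) := mxvec_index i a.

Definition adj (m n : nat) (A : 'M[C]_(m, n)) : 'M[C]_(n, m) :=
  (map_mx Num.conj A)^T.

Definition unitary (n : nat) (A : 'M[C]_n) : Prop :=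
  A *m adj A = 1%:M /\ adj A *m A = 1%:M.

Definition kron (A B : 'M[C]_q) : 'M[C]_(q * q) :=
  \sum_(i < q) \sum_(a < q) \sum_(j < q) \sum_(b < q)
     (A i j * B a b) *: delta_mx (idx i a) (idx j b).

Definition realign (X : 'M[C]_(q * q)) : 'M[C]_(q * q) :=
  \sum_(i < q) \sum_(a < q) \sum_(j < q) \sum_(b < q)
     X (idx i a) (idx j b) *: delta_mx (idx b a) (idx j i).

Definition dual_unitary (U : 'M[C]_(q * q)) : Prop :=
  unitary U /\ unitary (realign U).

Definition swap : 'M[C]_(q * q) :=
  \sum_(i < q) \sum_(a < q) delta_mx (idx a i) (idx i a).

Definition Ent (U : 'M[C]_(q * q)) : C :=
  let R := realign U *m adj (realign U) in
  1 - (q%:R ^+ 4)^-1 * \tr (R *m R).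

Definition ep (U : 'M[C]_(q * q)) : C :=
  (Ent U + Ent (U *m swap) - Ent swap) / Ent swap.

Definition ptr1 (X : 'M[C]_(q * q)) : 'M[C]_q :=
  \matrix_(a, b) \sum_(i < q) X (idx i a) (idx i b).
Definition ptr2 (X : 'M[C]_(q * q)) : 'M[C]_q :=
  \matrix_(i, j) \sum_(a < q) X (idx i a) (idx j a).

Definition Mplus (U : 'M[C]_(q * q)) (a : 'M[C]_q) : 'M[C]_q :=
  q%:R^-1 *: ptr1 (adj U *m kron a 1%:M *m U).
Definition Mminus (U : 'M[C]_(q * q)) (a : 'M[C]_q) : 'M[C]_q :=
  q%:R^-1 *: ptr2 (adj U *m kron 1%:M a *m U).

Definition Mchan (plus : bool) (U : 'M[C]_(q * q)) : 'M[C]_q -> 'M[C]_q :=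
  if plus then Mplus U else Mminus U.

(* The traceless subspace of 'M_q, as a row space of vectorized matrices
   (mxvec), with a basis given by the rows of [traceless_basis]. *)
Definition trace_col : 'M[C]_(q * q, 1) :=
  lin1_mx (fun v : 'rV[C]_(q * q) => (\tr (vec_mx v))%:M : 'rV[C]_1).
Definition traceless_basis := row_base (kermx trace_col).

(* Matrix (acting on coordinate row vectors in traceless_basis) of the
   restriction of a linear map f on 'M_q to the traceless subspace
   (which f is assumed/known to preserve). *)
Definition restr_traceless (f : 'M[C]_q -> 'M[C]_q) :=
  traceless_basis *m lin_mx f *m pinvmx traceless_basis.

(* s lists the nontrivial eigenvalues of f (those of its restriction to
   traceless matrices), with algebraic multiplicity. *)
Definition nontrivial_eigs (f : 'M[C]_q -> 'M[C]_q) (s : seq C) : Prop :=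
  char_poly (restr_traceless f) = \prod_(x <- s) ('X - x%:P).

End Defs.

(* Main.v *)
Set Warnings "-notation-overridden,-ambiguous-paths,-notation-incompatible-prefix".
Require Import Defs.
From HB Require Import structures.
From mathcomp Require Import all_boot all_order all_algebra.
From mathcomp Require Import mxred sesquilinear spectral.
From mathcomp Require Import ring zify.
Import Order.TTheory GRing.Theory Num.Theory.
Local Open Scope ring_scope.
Set Implicit Arguments.
Unset Strict Implicit.
Unset Printing Implicit Defensive.

Section Idx.
Variable q : nat.

Lemma idx_inj : injective (fun p : 'I_q * 'I_q => idx p.1 p.2).
Proof.
have [g hg _] := curry_mxvec_bij q q.
move=> [i a] [j b] /= e.
have h1 := hg (i, a) isT; have h2 := hg (j, b) isT.
by rewrite -h1 -h2 /= -/(idx i a) e.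
Qed.

Lemma idx_eq (i a j b : 'I_q) : (idx i a == idx j b) = (i == j) && (a == b).
Proof.
apply/eqP/andP => [e|[/eqP-> /eqP->]//].
by have := @idx_inj (i,a) (j,b) e => -[-> ->].
Qed.

Lemma idx_surj (k : 'I_(q * q)) : exists i a, k = idx i a.
Proof.
have [g hg1 hg2] := curry_mxvec_bij q q.
by exists (g k).1, (g k).2; rewrite /idx -[in LHS](hg2 k) //; case: (g k).
Qed.

Lemma sum_idx (R : nmodType) (F : 'I_(q * q) -> R) :
  \sum_k F k = \sum_i \sum_a F (idx i a).
Proof.
rewrite pair_big /=.
rewrite (reindex (fun p : 'I_q * 'I_q => idx p.1 p.2)) //=.
have [g hg1 hg2] := curry_mxvec_bij q q.
exists g => [p _|k _]; first by rewrite -[RHS]hg1 //; case: p.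
by rewrite -[RHS](hg2 k) //; case: (g k).
Qed.

End Idx.
Ltac ceq x y := let ne := fresh "ne" in case: (x =P y) => [->|/eqP ne]; rewrite ?eqxx /= ?(eq_sym y x) ?(negbTE ne) /= ?andbF ?mulr0 ?mul0r //.

Lemma sum_only (R : nmodType) (I : finType) (F : I -> R) (i0 : I) :
  (forall i, i != i0 -> F i = 0) -> \sum_i F i = F i0.
Proof. by move=> h; rewrite (bigD1 i0) //= big1 ?addr0 // => i /h. Qed.
Arguments sum_only {R I F} i0 _.

Lemma xchg (R : nmodType) (I J : finType) (F : I -> J -> R) :
  \sum_i \sum_j F i j = \sum_j \sum_i F i j.
Proof. exact: exchange_big. Qed.

Section Entries.
Variables (C : numClosedFieldType) (q : nat).
Local Notation M2 := 'M[C]_(q * q).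
Local Notation M1 := 'M[C]_q.

Lemma sum4E (G : 'I_q -> 'I_q -> 'I_q -> 'I_q -> M2) m n :
  (\sum_(i < q) \sum_(a < q) \sum_(j < q) \sum_(b < q) G i a j b) m n
  = \sum_(i < q) \sum_(a < q) \sum_(j < q) \sum_(b < q) G i a j b m n.
Proof.
rewrite summxE; apply: eq_bigr => i _; rewrite summxE; apply: eq_bigr => a _.
by rewrite summxE; apply: eq_bigr => j _; rewrite summxE.
Qed.

Lemma sum4_only (F : 'I_q -> 'I_q -> 'I_q -> 'I_q -> C) (i0 a0 j0 b0 : 'I_q) :
  (forall i a j b, ~~ [&& i == i0, a == a0, j == j0 & b == b0] -> F i a j b = 0) ->
  \sum_(i < q) \sum_(a < q) \sum_(j < q) \sum_(b < q) F i a j b = F i0 a0 j0 b0.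
Proof.
move=> h; rewrite (sum_only i0) => [|i ni].
  rewrite (sum_only a0) => [|a na].
    rewrite (sum_only j0) => [|j nj].
      rewrite (sum_only b0) => // b nb.
      by apply: h; rewrite !eqxx (negbTE nb).
    by rewrite big1 // => b _; apply: h; rewrite !eqxx (negbTE nj).
  by rewrite big1 // => j _; rewrite big1 // => b _; apply: h; rewrite eqxx (negbTE na).
by rewrite big1 // => a _; rewrite big1 // => j _; rewrite big1 // => b _;
  apply: h; rewrite (negbTE ni).
Qed.


Lemma kronE (A B : M1) i a j b : kron A B (idx i a) (idx j b) = A i j * B a b.
Proof.
rewrite /kron sum4E (@sum4_only _ i a j b) => [|i' a' j' b' h].
  by rewrite !mxE !eqxx mulr1.
rewrite !mxE !idx_eq.
move: h; ceq i' i; ceq a' a; ceq j' j; ceq b' b.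
Qed.

Lemma realignE (X : M2) i a j b : realign X (idx b a) (idx j i) = X (idx i a) (idx j b).
Proof.
rewrite /realign sum4E (@sum4_only _ i a j b) => [|i' a' j' b' h].
  by rewrite !mxE !eqxx mulr1.
rewrite !mxE !idx_eq.
move: h; ceq i' i; ceq a' a; ceq j' j; ceq b' b.
Qed.

Lemma adjE m n (A : 'M[C]_(m, n)) i j : adj A i j = (A j i)^*.
Proof. by rewrite !mxE. Qed.

Lemma swapE i a j b : swap C q (idx i a) (idx j b) = ((i == b) && (a == j))%:R.
Proof.
rewrite /swap summxE (sum_only a) => [|x nx].
  rewrite summxE (sum_only i) => [|y ny].
    by rewrite mxE !idx_eq !eqxx /= (eq_sym j) (eq_sym b) andbC.
  by rewrite mxE !idx_eq (eq_sym i y) (negbTE ny) /= ?mulr0n ?mul0rn.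
by rewrite summxE big1 // => y _; rewrite mxE !idx_eq (eq_sym a x) (negbTE nx) !andbF ?mulr0n ?mul0rn.
Qed.

Lemma mulswapr (X : M2) k j b : (X *m swap C q) k (idx j b) = X k (idx b j).
Proof.
rewrite mxE sum_idx (sum_only b) => [|x nx].
  rewrite (sum_only j) => [|y ny]; first by rewrite swapE !eqxx mulr1.
  by rewrite swapE (negbTE ny) andbF mulr0.
by rewrite big1 // => y _; rewrite swapE (negbTE nx) mulr0.
Qed.

Lemma mulswapl (X : M2) k j b : (swap C q *m X) (idx j b) k = X (idx b j) k.
Proof.
rewrite mxE sum_idx (sum_only b) => [|x nx].
  rewrite (sum_only j) => [|y ny]; first by rewrite swapE !eqxx mul1r.
  by rewrite swapE (eq_sym j y) (negbTE ny) mul0r.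
by rewrite big1 // => y _; rewrite swapE (eq_sym b x) (negbTE nx) andbF mul0r.
Qed.

Lemma mxeq_idx m (A B : 'M[C]_(q * q, m)) :
  (forall i a k, A (idx i a) k = B (idx i a) k) -> A = B.
Proof. by move=> h; apply/matrixP => k l; have [i [a ->]] := idx_surj k; apply: h. Qed.

Lemma mxeq_idx2 (A B : M2) :
  (forall i a j b, A (idx i a) (idx j b) = B (idx i a) (idx j b)) -> A = B.
Proof.
move=> h; apply/matrixP => k l; have [i [a ->]] := idx_surj k.
by have [j [b ->]] := idx_surj l; apply: h.
Qed.

End Entries.
Section Chan.
Variables (C : numClosedFieldType) (q : nat).
Local Notation M2 := 'M[C]_(q * q).
Local Notation M1 := 'M[C]_q.

Lemma linE (f : M1 -> M1) x y a b : lin_mx f (idx x y) (idx a b) = f (delta_mx x y) a b.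
Proof. by rewrite /lin_mx /lin1_mx mxE /= /idx vec_mx_delta mxvecE. Qed.

Lemma conjkronE (U : M2) (A B : M1) m n :
  (adj U *m kron A B *m U) m n =
  \sum_x \sum_c \sum_y \sum_d (U (idx x c) m)^* * (A x y * B c d) * U (idx y d) n.
Proof.
rewrite mxE sum_idx.
under eq_bigr => y _ do under eq_bigr => d _ do rewrite mxE sum_idx mulr_suml.
under eq_bigr => y _ do under eq_bigr => d _ do under eq_bigr => x _ do rewrite mulr_suml.
under eq_bigr => y _ do rewrite xchg.
under eq_bigr => y _ do under eq_bigr => x _ do rewrite xchg.
rewrite xchg; under eq_bigr => x _ do rewrite xchg.
apply: eq_bigr => x _; apply: eq_bigr => c _; apply: eq_bigr => y _; apply: eq_bigr => d _.
by rewrite adjE kronE.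
Qed.
End Chan.

Section Chan2.
Variables (C : numClosedFieldType) (q : nat).
Local Notation M2 := 'M[C]_(q * q).
Local Notation M1 := 'M[C]_q.

Lemma MplusE (U : M2) x0 y0 a b :
  Mplus U (delta_mx x0 y0) a b =
  q%:R^-1 * \sum_i \sum_c (U (idx x0 c) (idx i a))^* * U (idx y0 c) (idx i b).
Proof.
rewrite /Mplus !mxE; congr (_ * _); apply: eq_bigr => i _.
rewrite conjkronE (sum_only x0) => [|x nx]; last first.
  by do 3 (rewrite big1 // => ? _); rewrite !mxE (negbTE nx) /= mul0r mulr0 mul0r.
apply: eq_bigr => c _.
rewrite (sum_only y0) => [|y ny]; last first.
  by rewrite big1 // => ? _; rewrite !mxE (negbTE ny) andbF /= mul0r mulr0 mul0r.
rewrite (sum_only c) => [|d nd]; last first.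
  by rewrite !mxE eq_sym (negbTE nd) /= mulr0 mulr0 mul0r.
by rewrite !mxE !eqxx /= !mulr1.
Qed.

Lemma MminusE (U : M2) x0 y0 i j :
  Mminus U (delta_mx x0 y0) i j =
  q%:R^-1 * \sum_a \sum_c (U (idx c x0) (idx i a))^* * U (idx c y0) (idx j a).
Proof.
rewrite /Mminus !mxE; congr (_ * _); apply: eq_bigr => a _.
rewrite conjkronE; apply: eq_bigr => x _.
rewrite (sum_only x0) => [|c nc]; last first.
  by do 2 (rewrite big1 // => ? _); rewrite !mxE (negbTE nc) /= mulr0 mulr0 mul0r.
rewrite (sum_only x) => [|y ny]; last first.
  by rewrite big1 // => ? _; rewrite !mxE eq_sym (negbTE ny) /= mul0r mulr0 mul0r.
rewrite (sum_only y0) => [|d nd]; last first.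
  by rewrite !mxE (negbTE nd) andbF /= mulr0 mulr0 mul0r.
by rewrite !mxE !eqxx /= !mulr1.
Qed.

End Chan2.

Definition frob (C : numClosedFieldType) m n (A : 'M[C]_(m, n)) := \sum_i \sum_j `|A i j| ^+ 2.

Lemma alg (C : fieldType) (a b k : C) : k != 0 -> k^-1 * a * (k^-1 * b) = k^-2 * (b * a).
Proof. by move=> k0; rewrite expr2 invfM; ring. Qed.

Section Frob.
Variables (C : numClosedFieldType) (q : nat).
Local Notation M2 := 'M[C]_(q * q).
Local Notation M1 := 'M[C]_q.
Variable U : M2.
Let R := realign (U *m swap C q).
Let H := R *m adj R.
Let H2 := adj R *m R.

Lemma RE i a j b : R (idx b a) (idx j i) = U (idx i a) (idx b j).
Proof. by rewrite /R realignE mulswapr. Qed.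

Lemma HE b a b' a' : H (idx b a) (idx b' a') =
  \sum_j \sum_i U (idx i a) (idx b j) * (U (idx i a') (idx b' j))^*.
Proof.
rewrite /H mxE sum_idx; apply: eq_bigr => j _; apply: eq_bigr => i _.
by rewrite adjE !RE.
Qed.

Lemma H2E j i j' i' : H2 (idx j i) (idx j' i') =
  \sum_b \sum_a (U (idx i a) (idx b j))^* * U (idx i' a) (idx b j').
Proof.
rewrite /H2 mxE sum_idx; apply: eq_bigr => b _; apply: eq_bigr => a _.
by rewrite adjE !RE.
Qed.

Lemma trHH : \tr (H2 *m H2) = \tr (H *m H).
Proof. by rewrite /H /H2 -!mulmxA mxtrace_mulC !mulmxA. Qed.

Lemma trE (K : M2) : \tr (K *m K) = \sum_i \sum_x \sum_j \sum_y K (idx i x) (idx j y) * K (idx j y) (idx i x).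
Proof.
rewrite /mxtrace sum_idx; apply: eq_bigr => i _; apply: eq_bigr => x _.
by rewrite mxE sum_idx.
Qed.

Lemma frob_lin (f : M1 -> M1) : frob (lin_mx f) =
  \sum_x \sum_y \sum_a \sum_b `|f (delta_mx x y) a b| ^+ 2.
Proof.
rewrite /frob sum_idx; apply: eq_bigr => x _; apply: eq_bigr => y _.
by rewrite sum_idx; apply: eq_bigr => a _; apply: eq_bigr => b _; rewrite linE.
Qed.

Hypothesis q0 : q%:R != 0 :> C.

Lemma frob_minus : frob (lin_mx (Mminus U)) = q%:R^-2 * \tr (H *m H).
Proof.
rewrite frob_lin trE !mulr_sumr.
under eq_bigr => x _ do rewrite xchg.
rewrite xchg; apply: eq_bigr => i _; rewrite mulr_sumr; apply: eq_bigr => x _.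
rewrite mulr_sumr xchg; apply: eq_bigr => j _; rewrite mulr_sumr; apply: eq_bigr => y _.
rewrite normCK MminusE HE HE rmorphM /= rmorph_sum /=.
rewrite fmorphV /= conjC_nat alg //; congr (_ * (_ * _)).
  apply: eq_bigr => a _; rewrite rmorph_sum /=; apply: eq_bigr => c _.
  by rewrite rmorphM /= conjCK mulrC.
by apply: eq_bigr => a _; apply: eq_bigr => c _; rewrite mulrC.
Qed.

Lemma frob_plus : frob (lin_mx (Mplus U)) = q%:R^-2 * \tr (H *m H).
Proof.
rewrite -trHH frob_lin trE !mulr_sumr.
under eq_bigr => x _ do rewrite xchg.
rewrite xchg; apply: eq_bigr => a _; rewrite mulr_sumr; apply: eq_bigr => x _.
rewrite mulr_sumr xchg; apply: eq_bigr => b _; rewrite mulr_sumr; apply: eq_bigr => y _.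
rewrite normCK MplusE H2E H2E rmorphM /= rmorph_sum /=.
rewrite fmorphV /= conjC_nat alg // [X in _ = _ * X]mulrC; congr (_ * (_ * _)).
  apply: eq_bigr => i _; rewrite rmorph_sum /=; apply: eq_bigr => c _.
  by rewrite rmorphM /= conjCK mulrC.
Qed.

Lemma frob_chan plus : frob (lin_mx (Mchan plus U)) = q%:R^-2 * \tr (H *m H).
Proof. by case: plus; [exact: frob_plus | exact: frob_minus]. Qed.

End Frob.

Section EntSec.
Variables (C : numClosedFieldType) (q : nat).
Local Notation M2 := 'M[C]_(q * q).
Local Notation M1 := 'M[C]_q.
Hypothesis q0 : q%:R != 0 :> C.

Lemma Ent_unit (X : M2) : unitary (realign X) -> Ent X = 1 - q%:R^-2.
Proof. by case=> h _; rewrite /Ent h mul1mx mxtrace1 natrM; field. Qed.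

Lemma realign_swap : realign (swap C q) = swap C q.
Proof. by apply: mxeq_idx2 => b a j i; rewrite realignE !swapE (eq_sym i). Qed.

Lemma adj_swap : adj (swap C q) = swap C q.
Proof. by apply: mxeq_idx2 => b a j i; rewrite adjE !swapE conjC_nat andbC eq_sym (eq_sym a). Qed.

Lemma swap_swap : swap C q *m swap C q = 1%:M.
Proof.
apply: mxeq_idx2 => b a j i; rewrite mulswapl swapE !mxE idx_eq.
by rewrite (eq_sym a) andbC.
Qed.

Lemma swap_unitary : unitary (swap C q).
Proof. by rewrite /unitary adj_swap swap_swap. Qed.

Lemma Ent_swap : Ent (swap C q) = 1 - q%:R^-2.
Proof. by apply: Ent_unit; rewrite realign_swap; exact: swap_unitary. Qed.

End EntSec.

Lemma frob_eq (C : numClosedFieldType) (q : nat) (hq : (2 <= q)%N) (U : 'M[C]_(q * q))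
  (hU : dual_unitary U) plus :
  frob (lin_mx (Mchan plus U)) = 1 + (q ^ 2 - 1)%:R * (1 - ep U).
Proof.
have q0 : q%:R != 0 :> C by rewrite pnatr_eq0 -lt0n (leq_trans _ hq).
have q1 : q%:R ^+ 2 != 1 :> C.
  rewrite -natrX pnatr_eq1 -mulnn muln_eq1.
  by apply/negP => /andP[/eqP h _]; move: hq; rewrite h.
rewrite frob_chan // /ep (Ent_unit q0 hU.2) Ent_swap // /Ent /=.
set t := \tr _.
rewrite natrB ?expn_gt0 ?(leq_trans _ hq) // natrX.
by field; rewrite q0 subr_eq0 q1.
Qed.

Section Schur.
Variable C : numClosedFieldType.

Lemma adj_mul m n p (A : 'M[C]_(m, n)) (B : 'M[C]_(n, p)) : adj (A *m B) = adj B *m adj A.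
Proof. by rewrite /adj map_mxM trmx_mul. Qed.

Lemma adjK m n (A : 'M[C]_(m, n)) : adj (adj A) = A.
Proof. by apply/matrixP => i j; rewrite !adjE conjCK. Qed.

Lemma adj_tC n (P : 'M[C]_n) : adj P = (P ^t* )%sesqui.
Proof. by apply/matrixP => i j; rewrite !mxE. Qed.

Lemma frob_tr n (A : 'M[C]_n) : frob A = \tr (A *m adj A).
Proof.
rewrite /frob /mxtrace; apply: eq_bigr => i _; rewrite mxE; apply: eq_bigr => j _.
by rewrite adjE normCK.
Qed.

Lemma frob_ge0 m n (A : 'M[C]_(m, n)) : 0 <= frob A.
Proof. by apply: sumr_ge0 => i _; apply: sumr_ge0 => j _; rewrite exprn_ge0. Qed.

Lemma det_conj (R : comUnitRingType) n (A M B : 'M[R]_n) : A *m B = 1%:M ->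
  \det (A *m M *m B) = \det M.
Proof.
move=> AB; rewrite !det_mulmx mulrAC -det_mulmx AB det1 mul1r.
by [].
Qed.

Lemma char_poly_conj n (P L : 'M[C]_n) : P \in unitmx ->
  char_poly (P *m L *m invmx P) = char_poly L.
Proof.
move=> Pu; rewrite /char_poly /char_poly_mx.
rewrite -[in RHS](@det_conj _ _ (map_mx (@polyC C) P) _ (map_mx (@polyC C) (invmx P))); last first.
  by rewrite -map_mxM mulmxV // map_mx1.
congr (\det _).
rewrite !map_mxM mulmxBr mulmxBl; congr (_ - _).
by rewrite scalar_mxC -mulmxA -map_mxM mulmxV // map_mx1 mulmx1.
Qed.

Lemma frob_unitary_conj n (P L : 'M[C]_n) : adj P *m P = 1%:M ->
  frob (P *m L *m adj P) = frob L.
Proof.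
move=> PP; have PP' : P *m adj P = 1%:M by apply: mulmx1C.
rewrite !frob_tr !adj_mul adjK.
rewrite -!mulmxA mxtrace_mulC !mulmxA.
by rewrite -[L *m adj P *m P]mulmxA PP mulmx1 -[L *m adj L *m adj P *m P]mulmxA PP mulmx1.
Qed.

Lemma schur_sum n (L : 'M[C]_n) (s : seq C) :
  char_poly L = \prod_(x <- s) ('X - x%:P) -> \sum_(x <- s) `|x| ^+ 2 <= frob L.
Proof.
case: n L => [|n] L hs.
  have := size_char_poly L; rewrite hs size_prod_XsubC; case: s {hs} => // _.
  by rewrite big_nil frob_ge0.
have [P Pu hT] := Schur L isT.
have PP : P *m adj P = 1%:M by rewrite adj_tC; apply/unitarymxP.
have PP' : adj P *m P = 1%:M by apply: mulmx1C.
have Punit : P \in unitmx by case: (mulmx1_unit PP).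
have iP : invmx P = adj P.
  by rewrite -[invmx P]mul1mx -PP' -mulmxA mulmxV // mulmx1.
have TE : conjmx P L = P *m L *m adj P by rewrite conjumx // iP.
move: hT; rewrite /similar_to TE => hT.
have := char_poly_trig hT; rewrite -iP char_poly_conj // hs => e.
have pe : perm_eq s [seq (P *m L *m adj P) i i | i <- enum 'I_n.+1].
  apply: prod_XsubC_eq; rewrite e big_map big_enum /=.
  by apply: eq_bigr => i _; rewrite iP.
rewrite (perm_big _ pe) /= big_map big_enum /= -(frob_unitary_conj L PP').
rewrite /frob; apply: ler_sum => i _.
by rewrite (bigD1 i) //= lerDl sumr_ge0 // => j _; rewrite exprn_ge0.
Qed.

End Schur.

Section Split.
Variable C : numClosedFieldType.

Lemma col_free r n (B : 'M[C]_(r, n)) (v : 'rV[C]_n) (tc : 'cV[C]_n) :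
  row_free B -> B *m tc = 0 -> (v *m tc) 0 0 != 0 -> row_free (col_mx B v).
Proof.
move=> fB Btc vtc; rewrite -kermx_eq0; apply/eqP.
set K := kermx _; have KP : K *m col_mx B v = 0 by rewrite mulmx_ker.
rewrite -[K]hsubmxK in KP *; rewrite mul_row_col in KP.
have h2 : rsubmx K = 0.
  have := congr1 (mulmx^~ tc) KP; rewrite mulmxDl -!mulmxA Btc mulmx0 add0r mul0mx.
  rewrite [v *m tc]mx11_scalar mul_mx_scalar => /eqP.
  by rewrite scaler_eq0 (negbTE vtc) /= => /eqP.
rewrite h2 mul0mx addr0 in KP.
have h1 : lsubmx K = 0 by apply/eqP; rewrite -(mulmx_free_eq0 _ fB) KP.
by rewrite h1 h2 row_mx0.
Qed.

Lemma char_poly_1 : char_poly (1%:M : 'M[C]_1) = 'X - 1.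
Proof. by rewrite /char_poly det_mx11 /char_poly_mx !mxE /= mulr1n. Qed.

Lemma charpoly_split n r (L : 'M[C]_n) (B : 'M_(r, n)) (v : 'rV[C]_n) (tc : 'cV[C]_n)
  (e : (r + 1 = n)%N) :
  row_free B -> B *m tc = 0 -> (v *m tc) 0 0 != 0 ->
  (B *m L <= B)%MS -> v *m L = v ->
  char_poly L = char_poly (conjmx B L) * ('X - 1).
Proof.
case: n / e in L B v tc *.
move=> fB Btc vtc BL vL.
set P := col_mx B v.
have Pu : P \in unitmx by rewrite -row_free_unit (col_free fB Btc vtc).
set A := conjmx B L.
set D := block_mx A 0 0 (1%:M : 'M[C]_1).
have PL : P *m L = D *m P.
  rewrite /P mul_col_mx mul_block_col !mul0mx mul1mx addr0 add0r vL.
  by rewrite /A /conjmx mulmxKpV.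
have LE : L = invmx P *m D *m invmx (invmx P).
  by rewrite invmxK -mulmxA -PL mulmxA mulVmx ?mul1mx.
rewrite [in LHS]LE char_poly_conj ?unitmx_inv //.
rewrite /D /char_poly /char_poly_mx (scalar_mx_block r 1) map_block_mx !raddf0.
by rewrite opp_block_mx add_block_mx !subrr det_ublock -char_poly_1.
Qed.

End Split.

Section Traceless.
Variables (C : numClosedFieldType) (q : nat).
Hypothesis q0 : (0 < q)%N.
Local Notation M2 := 'M[C]_(q * q).
Local Notation M1 := 'M[C]_q.

Lemma tr_delta (i a : 'I_q) : \tr (delta_mx i a : M1) = (i == a)%:R.
Proof.
rewrite /mxtrace (sum_only i) => [|k nk]; first by rewrite mxE eqxx.
by rewrite mxE (negbTE nk).
Qed.

Lemma tcE i a : trace_col C q (idx i a) 0 = (i == a)%:R.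
Proof. by rewrite /trace_col /lin1_mx mxE /= /idx vec_mx_delta mxE eqxx mulr1n tr_delta. Qed.

Lemma vE a b : mxvec (1%:M : M1) 0 (idx a b) = (a == b)%:R.
Proof. by rewrite /idx mxvecE mxE. Qed.

Lemma vtcE : (mxvec (1%:M : M1) *m trace_col C q) 0 0 = q%:R.
Proof.
rewrite mxE sum_idx (eq_bigr (fun _ => 1)) ?sumr_const ?card_ord //.
move=> i _; rewrite (sum_only i) => [|a na]; first by rewrite vE tcE eqxx mulr1.
by rewrite vE (eq_sym i) (negbTE na) mul0r.
Qed.

Lemma rank_tc : \rank (trace_col C q) = 1%N.
Proof.
apply/eqP; rewrite eqn_leq rank_leq_col /= lt0n mxrank_eq0.
apply/eqP => /matrixP/(_ (idx (Ordinal q0) (Ordinal q0)) 0).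
by rewrite tcE eqxx mxE => /eqP; rewrite oner_eq0.
Qed.

Lemma rank_ker_tc : (\rank (kermx (trace_col C q)) + 1 = q * q)%N.
Proof. by rewrite mxrank_ker rank_tc subnK // muln_gt0 q0. Qed.

Variable f : M1 -> M1.
Hypothesis htr : forall x y, \tr (f (delta_mx x y)) = (x == y)%:R.
Hypothesis hI : forall a b, \sum_x f (delta_mx x x) a b = (a == b)%:R.

Lemma lin_tc : lin_mx f *m trace_col C q = trace_col C q.
Proof.
apply: mxeq_idx => x y k; rewrite (ord1 k) mxE sum_idx tcE -htr.
rewrite /mxtrace; apply: eq_bigr => a _; rewrite (sum_only a) => [|b nb].
  by rewrite linE tcE eqxx mulr1.
by rewrite tcE (eq_sym a) (negbTE nb) mulr0.
Qed.

Lemma v_lin : mxvec (1%:M : M1) *m lin_mx f = mxvec (1%:M : M1).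
Proof.
apply/matrixP => k l; rewrite (ord1 k); have [a [b ->]] := idx_surj l.
rewrite mxE sum_idx vE -hI; apply: eq_bigr => x _.
rewrite (sum_only x) => [|y ny]; first by rewrite vE eqxx mul1r linE.
by rewrite vE (eq_sym x) (negbTE ny) mul0r.
Qed.

Lemma restr_split :
  char_poly (lin_mx f) = char_poly (restr_traceless f) * ('X - 1).
Proof.
have Btc : traceless_basis C q *m trace_col C q = 0.
  by apply/eqP; rewrite -sub_kermx eq_row_base.
apply: (charpoly_split rank_ker_tc (row_base_free _) Btc (v := mxvec (1%:M : M1))); first by rewrite vtcE pnatr_eq0 -lt0n.
  rewrite /traceless_basis eq_row_base sub_kermx -mulmxA lin_tc.
  by rewrite -sub_kermx eq_row_base.
exact: v_lin.
Qed.

End Traceless.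

Section Hyps.
Variables (C : numClosedFieldType) (q : nat).
Hypothesis q0 : (0 < q)%N.
Local Notation M2 := 'M[C]_(q * q).
Local Notation M1 := 'M[C]_q.
Variable U : M2.
Hypothesis hU : unitary U.

Lemma qavg (b : bool) : q%:R^-1 * \sum_(c < q) (b%:R : C) = b%:R.
Proof.
rewrite sumr_const card_ord -(mulr_natr (b%:R : C) q) mulrCA mulVf ?mulr1 //.
by rewrite pnatr_eq0 -lt0n.
Qed.

Lemma UUE m n : (U *m adj U) m n = \sum_i \sum_a U m (idx i a) * (U n (idx i a))^*.
Proof. by rewrite mxE sum_idx; apply: eq_bigr => i _; apply: eq_bigr => a _; rewrite adjE. Qed.

Lemma UdUE m n : (adj U *m U) m n = \sum_i \sum_a (U (idx i a) m)^* * U (idx i a) n.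
Proof. by rewrite mxE sum_idx; apply: eq_bigr => i _; apply: eq_bigr => a _; rewrite adjE. Qed.

Lemma id_idx (i a j b : 'I_q) : (1%:M : M2) (idx i a) (idx j b) = ((i == j) && (a == b))%:R.
Proof. by rewrite mxE idx_eq. Qed.

Lemma htr_plus x y : \tr (Mplus U (delta_mx x y)) = (x == y)%:R.
Proof.
rewrite /mxtrace; under eq_bigr => a _ do rewrite MplusE.
rewrite -mulr_sumr -(qavg (x == y)); congr (_ * _).
under eq_bigr => a _ do rewrite xchg.
rewrite xchg; apply: eq_bigr => c _.
rewrite xchg.
have := congr1 (fun M : M2 => M (idx y c) (idx x c)) hU.1.
rewrite UUE id_idx eqxx andbT eq_sym => <-.
by apply: eq_bigr => i _; apply: eq_bigr => a _; rewrite mulrC.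
Qed.

Lemma hI_plus a b : \sum_x Mplus U (delta_mx x x) a b = (a == b)%:R.
Proof.
under eq_bigr => x _ do rewrite MplusE.
rewrite -mulr_sumr -(qavg (a == b)); congr (_ * _).
rewrite xchg; apply: eq_bigr => i _.
have := congr1 (fun M : M2 => M (idx i a) (idx i b)) hU.2.
by rewrite UdUE id_idx eqxx /= => <-.
Qed.

Lemma htr_minus x y : \tr (Mminus U (delta_mx x y)) = (x == y)%:R.
Proof.
rewrite /mxtrace; under eq_bigr => a _ do rewrite MminusE.
rewrite -mulr_sumr -(qavg (x == y)); congr (_ * _).
under eq_bigr => i _ do rewrite xchg.
rewrite xchg; apply: eq_bigr => c _.
have := congr1 (fun M : M2 => M (idx c y) (idx c x)) hU.1.
rewrite UUE id_idx eqxx /= eq_sym => <-.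
by apply: eq_bigr => i _; apply: eq_bigr => a _; rewrite mulrC.
Qed.

Lemma hI_minus i j : \sum_x Mminus U (delta_mx x x) i j = (i == j)%:R.
Proof.
under eq_bigr => x _ do rewrite MminusE.
rewrite -mulr_sumr -(qavg (i == j)); congr (_ * _).
rewrite xchg; apply: eq_bigr => a _; rewrite xchg.
have := congr1 (fun M : M2 => M (idx i a) (idx j a)) hU.2.
by rewrite UdUE id_idx eqxx andbT => <-.
Qed.

Lemma chan_split plus :
  char_poly (lin_mx (Mchan plus U)) = char_poly (restr_traceless (Mchan plus U)) * ('X - 1).
Proof.
case: plus; apply: restr_split => //.
- exact: htr_plus.
- exact: hI_plus.
- exact: htr_minus.
- exact: hI_minus.
Qed.

End Hyps.

Lemma main_bound (C : numClosedFieldType) (q : nat) (hq : (2 <= q)%N)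
  (U : 'M[C]_(q * q)) (hU : dual_unitary U) plus s :
  nontrivial_eigs (Mchan plus U) s ->
  \sum_(x <- s) `|x| ^+ 2 <= (q ^ 2 - 1)%:R * (1 - ep U) /\ size s = (q ^ 2 - 1)%N.
Proof.
have q0 : (0 < q)%N by apply: leq_trans hq.
rewrite /nontrivial_eigs => hs.
have e := chan_split q0 hU.1 plus; rewrite hs in e.
have e' : char_poly (lin_mx (Mchan plus U)) = \prod_(x <- 1 :: s) ('X - x%:P).
  by rewrite big_cons mulrC e.
split.
  have := schur_sum e'; rewrite big_cons frob_eq // normr1 expr1n.
  by rewrite lerD2l.
have := size_char_poly (restr_traceless (Mchan plus U)); rewrite hs size_prod_XsubC => -[->].
move: (rank_ker_tc C q0); move: (\rank _) => r h.
by rewrite -mulnn -h addnK.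
Qed.

Section Derived.
Variable C : numClosedFieldType.
Variables (N : nat) (s : seq C) (E : C).
Hypothesis N0 : (0 < N)%N.
Hypothesis sz : size s = N.
Hypothesis srt : sorted (fun x y : C => `|y| <= `|x|) s.
Hypothesis hsum : \sum_(x <- s) `|x| ^+ 2 <= N%:R * E.

Lemma keyk k j : (1 <= k)%N -> (k <= j)%N -> (j <= N)%N ->
  k%:R * `|s`_(j.-1)| ^+ 2 <= N%:R * E.
Proof.
move=> k1 kj jN; apply: le_trans hsum.
rewrite (big_nth 0) sz (big_cat_nat _ (n := k)) ?(leq_trans kj) //=.
rewrite -[X in X <= _]addr0; apply: lerD; last first.
  by apply: sumr_ge0 => i _; rewrite exprn_ge0.
rewrite mulr_natl -[in X in X <= _](subn0 k) -sumr_const_nat ler_sum_nat // => i /andP[_ ik].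
rewrite ler_pXn2r ?nnegrE ?normr_ge0 //.
have := @sorted_leq_nth C _ _ _ 0 s srt i j.-1; apply.
- by move=> x y z hyx hxz; apply: le_trans hxz hyx.
- by move=> x.
- by rewrite inE sz; lia.
- by rewrite inE sz; lia.
- lia.
Qed.

Lemma E_ge0 : 0 <= E.
Proof.
have h : 0 <= N%:R * E by apply: le_trans hsum; apply: sumr_ge0 => x _; rewrite exprn_ge0.
have -> : E = N%:R^-1 * (N%:R * E) by rewrite mulrA mulVf ?mul1r // pnatr_eq0 -lt0n.
by rewrite mulr_ge0 // invr_ge0 ler0n.
Qed.

Lemma part2 k : (1 <= k <= N)%N ->
  `|s`_(k.-1)| <= sqrtC E * sqrtC N%:R / sqrtC k%:R.
Proof.
case/andP=> k1 kN.
have k0 : 0 < sqrtC (k%:R : C) by rewrite sqrtC_gt0 ltr0n.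
rewrite ler_pdivlMr // -(ler_pXn2r (n := 2)) ?nnegrE ?mulr_ge0 ?sqrtC_ge0 ?ler0n ?E_ge0 //.
rewrite !exprMn !sqrtCK mulrC.
by rewrite [E * _]mulrC; apply: keyk.
Qed.

Lemma part5 (e : C) (hE : E = 1 - e) k : (1 <= k <= N)%N ->
  1 - k%:R / N%:R < e -> forall j : nat, (k <= j <= N)%N -> `|s`_(j.-1)| < 1.
Proof.
case/andP=> k1 kN he j /andP[kj jN].
have h1 := keyk k1 kj jN.
have Np : 0 < (N%:R : C) by rewrite ltr0n.
have h2 : N%:R * E < k%:R.
  have -> : (k%:R : C) = N%:R * (k%:R / N%:R) by rewrite mulrCA mulfV ?mulr1 // lt0r_neq0.
  rewrite hE ltr_pM2l //.
  by move: he; rewrite !ltrBlDl addrC.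
have h3 : `|s`_(j.-1)| ^+ 2 < 1.
  by rewrite -(ltr_pM2l (x := k%:R)) ?ltr0n // mulr1 (le_lt_trans h1 h2).
by rewrite -(ltr_pXn2r (n := 2)) ?nnegrE ?normr_ge0 ?ler01 // expr1n.
Qed.

End Derived.

Section Local.
Variables (C : numClosedFieldType) (q : nat).
Local Notation M2 := 'M[C]_(q * q).
Local Notation M1 := 'M[C]_q.

Lemma kron_mul (A B A' B' : M1) : kron A B *m kron A' B' = kron (A *m A') (B *m B').
Proof.
apply: mxeq_idx2 => i a j b; rewrite kronE !mxE sum_idx big_distrl /=.
apply: eq_bigr => k _; rewrite mulr_sumr; apply: eq_bigr => c _.
by rewrite !kronE mulrACA.
Qed.

Lemma adj_kron (A B : M1) : adj (kron A B) = kron (adj A) (adj B).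
Proof. by apply: mxeq_idx2 => i a j b; rewrite adjE !kronE !adjE rmorphM. Qed.

Lemma kron11 : kron (1%:M : M1) 1%:M = 1%:M.
Proof.
apply: mxeq_idx2 => i a j b; rewrite kronE !mxE idx_eq.
by case: (i == j); case: (a == b); rewrite ?mulr1 ?mul1r ?mulr0.
Qed.

Lemma unitary_mul n (A B : 'M[C]_n) : unitary A -> unitary B -> unitary (A *m B).
Proof.
move=> [hA1 hA2] [hB1 hB2]; rewrite /unitary adj_mul; split.
  by rewrite mulmxA -(mulmxA A) hB1 mulmx1 hA1.
by rewrite mulmxA -(mulmxA (adj B)) hA2 mulmx1 hB2.
Qed.

Lemma unitary_kron (A B : M1) : unitary A -> unitary B -> unitary (kron A B).
Proof.
move=> [hA1 hA2] [hB1 hB2]; rewrite /unitary adj_kron !kron_mul.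
by rewrite hA1 hA2 hB1 hB2 kron11.
Qed.

Lemma adj_tr m n (A : 'M[C]_(m, n)) : adj (A^T) = (adj A)^T.
Proof. by apply/matrixP => i j; rewrite !mxE. Qed.

Lemma unitary_tr n (A : 'M[C]_n) : unitary A -> unitary A^T.
Proof.
move=> [h1 h2]; rewrite /unitary adj_tr -!trmx_mul.
by rewrite h1 h2 !trmx1.
Qed.

Lemma mul3E m n p r (P : 'M[C]_(m, n)) (X : 'M[C]_(n, p)) (Q : 'M[C]_(p, r)) i j :
  (P *m X *m Q) i j = \sum_k \sum_l P i k * X k l * Q l j.
Proof.
rewrite mxE xchg; apply: eq_bigr => l _; rewrite mxE big_distrl /=.
by apply: eq_bigr => k _.
Qed.

Lemma realign_kron (A B A' B' : M1) (X : M2) :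
  realign (kron A B *m X *m kron A' B') = kron B'^T B *m realign X *m kron A' A^T.
Proof.
apply: mxeq_idx2 => b a j i; rewrite realignE !mul3E !sum_idx.
under eq_bigr => b' _ do under eq_bigr => a' _ do rewrite sum_idx.
under [RHS]eq_bigr => b' _ do under eq_bigr => a' _ do rewrite sum_idx.
under [RHS]eq_bigr => b' _ do under eq_bigr => a' _ do rewrite xchg.
under [RHS]eq_bigr => b' _ do rewrite xchg.
rewrite [RHS]xchg.
under [RHS]eq_bigr => i' _ do rewrite xchg.
under [RHS]eq_bigr => i' _ do under eq_bigr => a' _ do rewrite xchg.
apply: eq_bigr => i' _; apply: eq_bigr => a' _; apply: eq_bigr => j' _; apply: eq_bigr => b' _.
by rewrite !kronE realignE !mxE; ring.
Qed.

Lemma kron_swap (A B : M1) : kron A B *m swap C q = swap C q *m kron B A.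
Proof. by apply: mxeq_idx2 => i a j b; rewrite mulswapr mulswapl !kronE mulrC. Qed.

Lemma tr_conj2 (K H : M2) : unitary K ->
  \tr ((K *m H *m adj K) *m (K *m H *m adj K)) = \tr (H *m H).
Proof.
case=> h1 h2.
rewrite -!mulmxA [adj K *m (K *m _)]mulmxA h2 mul1mx.
by rewrite mxtrace_mulC -!mulmxA h2 mulmx1.
Qed.

Lemma Ent_lu (X Y : M2) (K1 K2 : M2) : unitary K1 -> unitary K2 ->
  realign Y = K1 *m realign X *m K2 -> Ent Y = Ent X.
Proof.
move=> u1 [u21 u22] e; rewrite /Ent /= e !adj_mul.
have -> : K1 *m realign X *m K2 *m (adj K2 *m (adj (realign X) *m adj K1)) =
          K1 *m (realign X *m adj (realign X)) *m adj K1.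
  by rewrite !mulmxA -(mulmxA _ K2) u21 mulmx1.
by rewrite tr_conj2.
Qed.

End Local.

Lemma ep_lu (C : numClosedFieldType) (q : nat) (hq : (2 <= q)%N) (U : 'M[C]_(q * q))
  (hU : dual_unitary U) (u1 u2 v1 v2 : 'M[C]_q) :
  unitary u1 -> unitary u2 -> unitary v1 -> unitary v2 ->
  dual_unitary (kron u1 u2 *m U *m kron v1 v2) /\
  ep (kron u1 u2 *m U *m kron v1 v2) = ep U.
Proof.
move=> hu1 hu2 hv1 hv2.
have q0 : q%:R != 0 :> C by rewrite pnatr_eq0 -lt0n (leq_trans _ hq).
have du : dual_unitary (kron u1 u2 *m U *m kron v1 v2).
  split.
    apply: unitary_mul; last exact: unitary_kron.
    by apply: unitary_mul; [exact: unitary_kron | case: hU].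
  rewrite realign_kron.
  apply: unitary_mul; last by apply: unitary_kron => //; apply: unitary_tr.
  apply: unitary_mul; last by case: hU.
  by apply: unitary_kron => //; apply: unitary_tr.
split=> //; rewrite /ep (Ent_unit q0 du.2) (Ent_unit q0 hU.2); congr ((_ + _ - _) / _).
apply: (@Ent_lu _ _ _ _ (kron v1^T u2) (kron v2 u1^T)).
- by apply: unitary_kron => //; apply: unitary_tr.
- by apply: unitary_kron => //; apply: unitary_tr.
by rewrite -mulmxA kron_swap !mulmxA -(mulmxA _ U) realign_kron.
Qed.

Lemma sq_lt1 (C : numClosedFieldType) (x : C) : `|x| ^+ 2 < 1 -> `|x| < 1.
Proof. by move=> h; rewrite -(ltr_pXn2r (n := 2)) ?nnegrE ?normr_ge0 ?ler01 // expr1n. Qed.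

Unset Implicit Arguments.
Set Strict Implicit.

Theorem mainTheorem3 (C : numClosedFieldType) (q : nat) (hq : (2 <= q)%N)
  (U : 'M[C]_(q * q)) (hU : dual_unitary U) :
  (forall (plus : bool) (s : seq C),
     nontrivial_eigs (Mchan plus U) s ->
     sorted (fun x y => `|y| <= `|x|) s ->
     [/\ \sum_(x <- s) `|x| ^+ 2 <= (q ^ 2 - 1)%:R * (1 - ep U),
         (forall k : nat, (1 <= k <= q ^ 2 - 1)%N ->
            `|s`_(k.-1)| <= sqrtC (1 - ep U) * sqrtC (q ^ 2 - 1)%:R / sqrtC k%:R),
         `|s`_(q ^ 2 - 2)| <= sqrtC (1 - ep U),
         `|s`_0| <= sqrtC (1 - ep U) * sqrtC (q ^ 2 - 1)%:R
       & (forall k : nat, (1 <= k <= q ^ 2 - 1)%N ->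
            1 - k%:R / (q ^ 2 - 1)%:R < ep U ->
            forall j : nat, (k <= j <= q ^ 2 - 1)%N -> `|s`_(j.-1)| < 1)]) /\
  ((q ^ 2 - 2)%:R / (q ^ 2 - 1)%:R < ep U ->
   forall u1 u2 v1 v2 : 'M[C]_q,
     unitary u1 -> unitary u2 -> unitary v1 -> unitary v2 ->
     forall (plus : bool) (s : seq C),
       nontrivial_eigs (Mchan plus (kron u1 u2 *m U *m kron v1 v2)) s ->
       forall x, x \in s -> `|x| < 1).
Proof.
have N0 : (0 < q ^ 2 - 1)%N.
  by rewrite subn_gt0 -mulnn (leq_trans _ (leq_mul hq hq)).
split.
  move=> plus s hs srt; have [hb hsz] := main_bound hq hU hs.
  have p2 := part2 N0 hsz srt hb.
  split => //.
  - have := p2 (q ^ 2 - 1)%N; rewrite N0 leqnn => /(_ isT).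
    rewrite mulfK; last by rewrite sqrtC_eq0 pnatr_eq0 -lt0n.
    by have -> : (q ^ 2 - 2 = (q ^ 2 - 1).-1)%N by rewrite -subn1 -subnDA.
  - by have := p2 1%N; rewrite N0 /= sqrtC1 divr1 => /(_ isT).
  - exact: (part5 N0 hsz srt hb (erefl _)).
move=> hep u1 u2 v1 v2 h1 h2 h3 h4 plus s hs x xs.
have [du epe] := ep_lu hq hU h1 h2 h3 h4.
have [hb _] := main_bound hq du hs; rewrite epe in hb.
apply: sq_lt1; apply: le_lt_trans (_ : `|x| ^+ 2 <= \sum_(y <- s) `|y| ^+ 2) _.
  rewrite (big_rem x) //= lerDl; apply: sumr_ge0 => y _; exact: exprn_ge0.
apply: le_lt_trans hb _.
have Np : 0 < ((q ^ 2 - 1)%N%:R : C) by rewrite ltr0n.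
have e2 : ((q ^ 2 - 2)%N%:R : C) = (q ^ 2 - 1)%N%:R - 1.
  by rewrite -[in RHS](subnK N0) natrD addrK -subnDA.
have e3 : 1 - ((q ^ 2 - 2)%N%:R : C) / (q ^ 2 - 1)%N%:R = ((q ^ 2 - 1)%N%:R)^-1.
  by rewrite e2; field; rewrite lt0r_neq0.
rewrite -[X in _ < X](mulfV (lt0r_neq0 Np)) ltr_pM2l // -e3.
by rewrite ltrD2l ltrN2.
Qed.
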